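(* Let $n,m\ge1$, $c_1,\dots,c_n>0$, $T>0$, $\epsilon>0$, constant $r_1,\dots,r_m>0$, $\kappa_{ij}\ge0$. Let $\mu_j(q_j)=0$ for $q_j\le c_j$ and $\mu_j(q_j)=T(1-c_j/q_j)$ for $q_j>c_j$, and $\delta_{ij}(\mu)=e^{-(\kappa_{ij}+\mu_j)/\epsilon}/\sum_k e^{-(\kappa_{ik}+\mu_k)/\epsilon}$. Consider the dynamics $$\dot q_j=\sum_{i=1}^m x_{ij}-\frac{q_j}{T},\quad \mu_j=\mu_j(q_j),\quad x_{ij}=r_i\delta_{ij}(\mu),$$ which has a unique equilibrium point $(X^*,q^*,\mu^* )$ (i.e. the unique triple with $\mu^*_j=\mu_j(q^*_j)$, $x^*_{ij}=r_i\delta_{ij}(\mu^* )$, $\sum_ix^*_{ij}=q^*_j/T$). Then any trajectory $(q(t),X(t),\mu(t))$ of these dynamics, with $q(t)$ defined for $t\ge0$ from an arbitrary initial condition, $\mu(t)=\mu(q(t))$, $X(t)=(r_i\delta_{ij}(\mu(t)))$, converges as $t\to\infty$ to $(X^*,q^*,\mu^* )$.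
   Context: The equilibrium coincides with the unique optimum $(X^*,q^* )$ of $\min\sum\kappa_{ij}x_{ij}+\sum_j\beta_j(q_j)+\epsilon\sum x_{ij}\log(x_{ij}/r_i)$ subject to $x_{ij}\ge0$, $\sum_jx_{ij}=r_i$, $\sum_ix_{ij}=q_j/T$, where $\beta_j(q)=\int_0^q[1-c_j/\sigma]^+d\sigma$, together with the optimal Lagrange multiplier $\mu^*$. *)

(* Defs.v *)
From HB Require Import structures.
From mathcomp Require Import all_boot all_order all_algebra.
From mathcomp Require Import all_classical all_reals all_analysis.
Set Implicit Arguments. Unset Strict Implicit. Unset Printing Implicit Defensive.
Import Order.TTheory GRing.Theory Num.Theory.
Import numFieldNormedType.Exports.
Local Open Scope ring_scope.

Definition price {R : realType} (T c q : R) : R :=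
  if q <= c then 0 else T * (1 - c / q).

Definition price_vec {R : realType} {n : nat} (T : R) (c q : 'I_n -> R)
  : 'I_n -> R := fun j => price T (c j) (q j).

Definition delta {R : realType} {m n : nat} (eps : R)
  (kappa : 'I_m -> 'I_n -> R) (mu : 'I_n -> R) (i : 'I_m) (j : 'I_n) : R :=
  expR (- (kappa i j + mu j) / eps) /
  \sum_(k < n) expR (- (kappa i k + mu k) / eps).

Definition flow {R : realType} {m n : nat} (eps : R) (r : 'I_m -> R)
  (kappa : 'I_m -> 'I_n -> R) (mu : 'I_n -> R) (i : 'I_m) (j : 'I_n) : R :=
  r i * delta eps kappa mu i j.

Definition qdot {R : realType} {m n : nat} (T eps : R) (c : 'I_n -> R)
  (r : 'I_m -> R) (kappa : 'I_m -> 'I_n -> R) (q : 'I_n -> R) (j : 'I_n) : R :=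
  \sum_(i < m) flow eps r kappa (price_vec T c q) i j - q j / T.

Definition is_equilibrium {R : realType} {m n : nat} (T eps : R)
  (c : 'I_n -> R) (r : 'I_m -> R) (kappa : 'I_m -> 'I_n -> R)
  (qs : 'I_n -> R) : Prop :=
  forall j : 'I_n,
    \sum_(i < m) flow eps r kappa (price_vec T c qs) i j = qs j / T.

(* Main.v *)
Require Import Defs.
From HB Require Import structures.
From mathcomp Require Import all_boot all_order all_algebra.
From mathcomp Require Import all_classical all_reals all_analysis.
From mathcomp Require Import ring lra.
Import Order.TTheory GRing.Theory Num.Theory.
Import numFieldNormedType.Exports.
Local Open Scope classical_set_scope.
Local Open Scope ring_scope.

Section Helpers.
Context {R : realType}.

Lemma deriv_eps (f : R -> R) (t f' : R) : is_derive t 1 f f' ->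
  forall e, 0 < e -> exists2 d, 0 < d &
    forall s, `|s - t| < d -> `|f s - f t - f' * (s - t)| <= e * `|s - t|.
Proof.
move=> [H E] e e0.
have H' : (fun h => h^-1 *: ((f \o shift t) (h *: 1) - f t)) @ 0^' --> f'.
  by rewrite -E; exact: H.
move/cvgrPdist_le : H' => /(_ e e0).
move=> /= /nbhs_ballP [d d0 hd].
exists d => // s hs.
have [->|hne] := eqVneq s t.
  by rewrite !subrr mulr0 subr0 normr0 mulr0.
have hb : ball (0:R) d (s - t) by rewrite /ball /= sub0r normrN.
have hst : s - t != 0 by rewrite subr_eq0.
have := hd _ hb hst.
have -> : (s - t)%:A + t = s.
  by rewrite -[_%:A]/((s - t) * 1) mulr1 subrK.
rewrite -[_ *: _]/((s - t)^-1 * (f s - f t)) => h.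
have -> : f s - f t - f' * (s - t) = - ((s - t) * (f' - (s - t)^-1 * (f s - f t))).
  by field.
by rewrite normrN normrM mulrC ler_wpM2r.
Qed.

Lemma real_ind (U : R -> R) (a b k : R) : a <= b ->
 (forall t, a < t <= b -> forall e, 0 < e -> exists2 d, 0 < d &
    forall x, t - d < x < t -> U t <= U x + e) ->
 (forall t, a <= t < b -> exists2 d, 0 < d &
    forall s, t < s < t + d -> U s <= U t + k * (s - t)) ->
 U b <= U a + k * (b - a).
Proof.
move=> hab hc hl.
pose S := [set s | a <= s <= b /\ forall x, a <= x <= s -> U x <= U a + k * (x - a)].
have Sa : S a.
  split; first by rewrite lexx hab.
  move=> x /andP[h1 h2]; have -> : x = a by apply/le_anti; rewrite h1 h2.
  by rewrite subrr mulr0 addr0.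
have hs : has_sup S by split; [exists a | exists b => x [/andP[_ ->]]].
set s := sup S.
have as_ : a <= s := sup_upper_bound hs Sa.
have sb : s <= b := ge_sup (ex_intro _ a Sa) (fun x => fun '(conj h _) => proj2 (andP h)).
have C1 : forall x, a <= x < s -> U x <= U a + k * (x - a).
  move=> x /andP[ax xs].
  have [y [/andP[ay yb] Sy] hy] := sup_adherent (eps := s - x) (ltac:(by rewrite subr_gt0)) hs.
  apply: Sy; rewrite ax /=; rewrite -/s in hy; lra.
have C2 : U s <= U a + k * (s - a).
  have [sa|sa] := eqVneq s a; first by rewrite sa subrr mulr0 addr0.
  have as' : a < s by rewrite lt_neqAle eq_sym sa as_.
  apply/ler_addgt0Pr => e e0.
  have [d d0 hd] := hc s (ltac:(by rewrite as' sb)) (e / 2) (ltac:(by rewrite divr_gt0)).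
  pose e' := e / (4 * (`|k| + 1)).
  have e'0 : 0 < e' by rewrite divr_gt0 // mulr_gt0 // ltr_wpDl.
  have hk1 : 0 < `|k| + 1 by rewrite ltr_wpDl.
  have he' : e' * (`|k| + 1) = e / 4.
    by rewrite /e' invfM mulrAC -!mulrA (mulrCA (`|k| + 1)) mulfV ?mulr1 // gt_eqF.
  pose m := Num.min d (Num.min (s - a) e').
  have m0 : 0 < m by rewrite !lt_min d0 e'0 subr_gt0 as'.
  have md : m <= d by rewrite ge_min lexx.
  have msa : m <= s - a by rewrite /m !ge_min lexx orbT.
  have me : m <= e' by rewrite /m !ge_min lexx !orbT.
  pose x := s - m / 2.
  have hx1 : s - d < x < s by rewrite /x; apply/andP; split; lra.
  have h1 := hd x hx1.
  have hx2 : a <= x < s by rewrite /x; apply/andP; split; lra.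
  have h2 := C1 x hx2.
  have h3 : - k * (s - x) <= (`|k| + 1) * (s - x).
    rewrite ler_pM2r; last by rewrite /x; lra.
    have := ler_norm (- k); rewrite normrN; lra.
  have h4 : (`|k| + 1) * (s - x) <= e / 4.
    rewrite -he' mulrC ler_pM2r; last by rewrite ltr_wpDl.
    rewrite /x; lra.
  have h5 : k * (x - a) = k * (s - a) - k * (s - x) by ring.
  move: h3; rewrite mulNr; lra.
have C3 : s = b.
  apply/eqP; rewrite eq_le sb /=; apply/negPn/negP; rewrite -ltNge => sb'.
  have [d d0 hd] := hl s (ltac:(by rewrite as_ sb')).
  pose m := Num.min d (b - s).
  have m0 : 0 < m by rewrite !lt_min d0 subr_gt0 sb'.
  have md : m <= d by rewrite ge_min lexx.
  have mb : m <= b - s by rewrite /m !ge_min lexx orbT.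
  have : S (s + m / 2).
    split; first by apply/andP; split; lra.
    move=> x /andP[ax xs].
    have [xs'|xs'|->] := ltgtP x s.
    - by apply: C1; rewrite ax xs'.
    - have := hd x (ltac:(apply/andP; split; lra)).
      have -> : U a + k * (x - a) = U a + k * (s - a) + k * (x - s) by ring.
      lra.
    - exact: C2.
  move/(sup_upper_bound hs); rewrite -/s; lra.
by rewrite -C3.
Qed.
Lemma sum_exp_gt0 (n : nat) (hn : (0 < n)%N) (g : 'I_n -> R) :
  0 < \sum_(k < n) expR (g k).
Proof.
rewrite (bigD1 (Ordinal hn)) //=.
have := expR_gt0 (g (Ordinal hn)).
have : 0 <= \sum_(k < n | k != Ordinal hn) expR (g k).
  by apply: sumr_ge0 => k _; exact: expR_ge0.
lra.
Qed.

Lemma frac_ineq (A B A' B' W W' : R) : W = A + B -> W' = A' + B' ->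
  0 <= A -> A <= A' -> 0 <= B' -> B' <= B ->
  0 < W -> 0 < W' -> (A - B) / W - (A' - B') / W' <= 0.
Proof.
move=> -> -> *; rewrite subr_le0 ler_pdivrMr // mulrAC ler_pdivlMr //; nra.
Qed.

Lemma comb_delta (m n : nat) (hn : (0 < n)%N) (eps : R) (heps : 0 < eps)
  (kappa : 'I_m -> 'I_n -> R) (mu nu : 'I_n -> R) (S : pred 'I_n) (i : 'I_m) :
  (forall j, S j -> nu j <= mu j) -> (forall j, ~~ S j -> mu j <= nu j) ->
  \sum_(j < n) (if S j then 1 else -1) *
     (delta eps kappa mu i j - delta eps kappa nu i j) <= 0.
Proof.
move=> hS hNS.
rewrite /delta.
set w := fun (mu : 'I_n -> R) j => expR (- (kappa i j + mu j) / eps).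
rewrite -/(w mu _) -/(w nu _).
have -> : forall (a b : 'I_n -> R) (X Y : R),
  \sum_(j < n) (if S j then 1 else -1) * (a j / X - b j / Y) =
  (\sum_(j < n) (if S j then 1 else -1) * a j) / X -
  (\sum_(j < n) (if S j then 1 else -1) * b j) / Y.
  move=> a b X Y; rewrite !mulr_suml -sumrB; apply: eq_bigr => j _; ring.
have eS : forall a : 'I_n -> R, \sum_(j < n) (if S j then 1 else -1) * a j =
   \sum_(j < n | S j) a j - \sum_(j < n | ~~ S j) a j.
  move=> a; rewrite (bigID S) /= -sumrN; congr (_ + _); apply: eq_bigr => j hj.
    by rewrite hj mul1r.
  by rewrite (negbTE hj) mulN1r.
rewrite !eS.
apply: frac_ineq; first exact: bigID; first exact: bigID.
- by apply: sumr_ge0 => j _; exact: expR_ge0.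
- apply: ler_sum => j Sj; rewrite /w ler_expR ler_pM2r ?invr_gt0 // lerN2 lerD2l.
  exact: hS.
- by apply: sumr_ge0 => j _; exact: expR_ge0.
- apply: ler_sum => j Sj; rewrite /w ler_expR ler_pM2r ?invr_gt0 // lerN2 lerD2l.
  exact: hNS.
- exact: sum_exp_gt0.
- exact: sum_exp_gt0.
Qed.

Lemma comb_flow (m n : nat) (hn : (0 < n)%N) (eps : R) (heps : 0 < eps)
  (r : 'I_m -> R) (hr : forall i, 0 < r i)
  (kappa : 'I_m -> 'I_n -> R) (mu nu : 'I_n -> R) (S : pred 'I_n) :
  (forall j, S j -> nu j <= mu j) -> (forall j, ~~ S j -> mu j <= nu j) ->
  \sum_(j < n) (if S j then 1 else -1) *
     (\sum_(i < m) flow eps r kappa mu i j - \sum_(i < m) flow eps r kappa nu i j) <= 0.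
Proof.
move=> hS hNS.
have -> : \sum_(j < n) (if S j then 1 else -1) *
     (\sum_(i < m) flow eps r kappa mu i j - \sum_(i < m) flow eps r kappa nu i j)
  = \sum_(i < m) r i * \sum_(j < n) (if S j then 1 else -1) *
     (delta eps kappa mu i j - delta eps kappa nu i j).
  transitivity (\sum_(j < n) \sum_(i < m) r i * ((if S j then 1 else -1) *
     (delta eps kappa mu i j - delta eps kappa nu i j))).
    apply: eq_bigr => j _; rewrite -sumrB mulr_sumr; apply: eq_bigr => i _.
    rewrite /flow; ring.
  rewrite exchange_big /=; apply: eq_bigr => i _; by rewrite mulr_sumr.
apply: sumr_le0 => i _; apply: mulr_ge0_le0; first exact: ltW.
exact: comb_delta.
Qed.
Lemma abs_step (f : R -> R) (t f' a : R) : is_derive t 1 f f' -> forall e, 0 < e ->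
  exists2 d, 0 < d & forall s, t < s < t + d ->
   `|f s - a| <= `|f t - a| +
     ((if f t - a == 0 then `|f'| else Num.sg (f t - a) * f') + e) * (s - t).
Proof.
move=> hd e e0; have [d1 d10 h1] := @deriv_eps f t f' hd e e0.
have key : forall s, `|s - t| < d1 ->
    `|f s - a| <= e * `|s - t| + `|f' * (s - t) + (f t - a)|.
  move=> s hs; have := ler_normD (f s - f t - f' * (s - t)) (f' * (s - t) + (f t - a)).
  have -> : f s - f t - f' * (s - t) + (f' * (s - t) + (f t - a)) = f s - a by ring.
  have := h1 s hs; lra.
set g := f t - a; rewrite -/g in key.
have [g0|gn0] := eqVneq g 0.
  exists d1 => // s /andP[ts tsd].
  have hst : 0 <= s - t by rewrite subr_ge0 ltW.
  have := key s (ltac:(rewrite ger0_norm //; lra)).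
  rewrite g0 addr0 normrM (ger0_norm hst) normr0; lra.
have gp : 0 < `|g| by rewrite normr_gt0.
have kp : 0 < `|f'| + 1 by rewrite ltr_wpDl.
exists (Num.min d1 (`|g| / (`|f'| + 1))).
  by rewrite lt_min d10 divr_gt0.
move=> s /andP[ts]; rewrite -ltrBlDl.
rewrite lt_min => /andP[hs1 hs2].
have hst : 0 < s - t by rewrite subr_gt0.
have := key s (ltac:(rewrite gtr0_norm //)).
rewrite (gtr0_norm hst).
move: hs2; rewrite ltr_pdivlMr // => hs2.
have n1 := ler_norm (f' * (s - t)).
have n2 := ler_norm (- (f' * (s - t))).
rewrite normrN normrM (gtr0_norm hst) in n1 n2.
have [gpos|gneg] := ltP 0 g.
  rewrite gtr0_sg // (gtr0_norm gpos) in gp hs2 *.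
  rewrite (@ger0_norm _ (f' * (s - t) + g)); [lra|lra].
have gneg' : g < 0 by rewrite lt_neqAle gn0 gneg.
rewrite ltr0_sg // (ltr0_norm gneg') in gp hs2 *.
rewrite (@ler0_norm _ (f' * (s - t) + g)); [lra|lra].
Qed.
Lemma cvg_sum_ord (n : nat) (f : 'I_n -> R -> R) (l : 'I_n -> R) :
  (forall k, f k t @[t --> +oo] --> l k) ->
  (\sum_(k < n) f k t) @[t --> +oo] --> \sum_(k < n) l k.
Proof.
move=> h.
apply: (cvg_big (op := +%R) (x0 := 0) (P := xpredT)) => //.
exact: add_continuous.
Qed.

Lemma price_mono (T c x y : R) : 0 < T -> 0 < c -> x <= y ->
  price T c x <= price T c y.
Proof.
move=> hT hc hxy; rewrite /price.
have [xc|xc] := leP x c; have [yc|yc] := leP y c => //.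
- apply: mulr_ge0; first exact: ltW.
  by rewrite subr_ge0 ler_pdivrMr ?mul1r ?ltW // (lt_trans hc yc).
- lra.
- have x0 : 0 < x by lra.
  have y0 : 0 < y by lra.
  rewrite ler_pM2l // lerD2l lerN2 ler_pM2l // lef_pV2 //.
Qed.

Lemma price_lip (T c x y : R) : 0 < T -> 0 < c -> 0 < x -> 0 < y ->
  `|price T c x - price T c y| <= T * `|c / x - c / y|.
Proof.
move=> hT hc x0 y0.
wlog hxy : x y x0 y0 / x <= y.
  move=> W; have [h|h] := leP x y; first exact: W.
  by rewrite distrC (distrC (c / x)); apply: W => //; exact: ltW.
have hm := @price_mono T c x y hT hc hxy.
rewrite ler0_norm ?subr_le0 // opprB.
have cxy : c / y <= c / x by rewrite ler_pM2l // lef_pV2.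
rewrite ger0_norm ?subr_ge0 //.
rewrite /price.
have [xc|xc] := leP x c; have [yc|yc] := leP y c.
- rewrite subrr; apply: mulr_ge0; [exact: ltW | by rewrite subr_ge0].
- have : 1 <= c / x by rewrite ler_pdivlMr // mul1r.
  move=> h1; rewrite subr0 ler_pM2l //; lra.
- lra.
- rewrite -mulrBr ler_pM2l //; lra.
Qed.

Lemma real_ind2 (U : R -> R) (a b k : R) : a <= b ->
 (forall t, a < t <= b -> forall e, 0 < e -> exists2 d, 0 < d &
    forall x, t - d < x < t -> U t <= U x + e) ->
 (forall eta, 0 < eta -> forall t, a <= t < b -> exists2 d, 0 < d &
    forall s, t < s < t + d -> U s <= U t + (k + eta) * (s - t)) ->
 U b <= U a + k * (b - a).
Proof.
move=> hab hc hl; apply/ler_addgt0Pr => e e0.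
have hb1 : 0 < b - a + 1 by lra.
have eta0 : 0 < e / (b - a + 1) by rewrite divr_gt0.
have := @real_ind U a b (k + e / (b - a + 1)) hab hc (hl _ eta0).
have : e / (b - a + 1) * (b - a) <= e.
  by rewrite mulrAC ler_pdivrMr //; nra.
lra.
Qed.

Lemma flow_pos (m n : nat) (hn : (0 < n)%N) (eps : R) (r : 'I_m -> R)
  (hr : forall i, 0 < r i) (kappa : 'I_m -> 'I_n -> R) (mu : 'I_n -> R) i j :
  0 < flow eps r kappa mu i j.
Proof.
rewrite /flow /delta; apply: mulr_gt0 => //; apply: divr_gt0.
  exact: expR_gt0.
exact: sum_exp_gt0.
Qed.

Lemma cvg_exp_term (P : R -> R) (p k e : R) : P t @[t --> +oo] --> p ->
  expR (- (k + P t) / e) @[t --> +oo] --> expR (- (k + p) / e).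
Proof.
move=> hP; apply: continuous_cvg; first exact: continuous_expR.
apply: cvgMl; apply: cvgN; apply: cvgD => //; exact: cvg_cst.
Qed.

End Helpers.

Theorem theorem2 (R : realType) (n m : nat) (hn : (0 < n)%N) (hm : (0 < m)%N)
  (c : 'I_n -> R) (T eps : R) (r : 'I_m -> R) (kappa : 'I_m -> 'I_n -> R)
  (hc : forall j, 0 < c j) (hT : 0 < T) (heps : 0 < eps)
  (hr : forall i, 0 < r i) (hk : forall i j, 0 <= kappa i j)
  (qs : 'I_n -> R) (heq : is_equilibrium T eps c r kappa qs)
  (q : R -> 'I_n -> R)
  (hode : forall t : R, 0 < t -> forall j : 'I_n,
      is_derive t 1 (fun s => q s j) (qdot T eps c r kappa (q t) j)) :
  (forall j : 'I_n, q t j @[t --> +oo] --> qs j) /\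
  (forall j : 'I_n, price_vec T c (q t) j @[t --> +oo] --> price_vec T c qs j) /\
  (forall (i : 'I_m) (j : 'I_n),
      flow eps r kappa (price_vec T c (q t)) i j @[t --> +oo]
        --> flow eps r kappa (price_vec T c qs) i j).
Proof.
pose F (p : 'I_n -> R) j := \sum_(i < m) flow eps r kappa (price_vec T c p) i j.
pose V t := \sum_(j < n) `|q t j - qs j|.
have hqd : forall t j, qdot T eps c r kappa (q t) j
    = (F (q t) j - F qs j) - (q t j - qs j) / T.
  move=> t j; rewrite /qdot -/(F (q t) j).
  have -> : F qs j = qs j / T by exact: heq.
  ring.
have V0 : forall t, 0 <= V t by move=> t; apply: sumr_ge0.
have Vj : forall t j, `|q t j - qs j| <= V t.
  move=> t j; rewrite /V (bigD1 j) //=.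
  have : 0 <= \sum_(k < n | k != j) `|q t k - qs k| by apply: sumr_ge0.
  lra.
have nR0 : 0 < (n%:R : R) by rewrite ltr0n.
have hloc : forall t, 0 < t -> forall eta, 0 < eta -> exists2 d, 0 < d &
    forall s, t < s < t + d -> V s <= V t + (- V t / T + eta) * (s - t).
  move=> t t0 eta eta0.
  pose e' := eta / n%:R.
  have e'0 : 0 < e' by rewrite divr_gt0.
  pose D j := (if q t j - qs j == 0 then `|qdot T eps c r kappa (q t) j|
     else Num.sg (q t j - qs j) * qdot T eps c r kappa (q t) j).
  have hj : forall j, \forall s \near t, t < s ->
      `|q s j - qs j| <= `|q t j - qs j| + (D j + e') * (s - t).
    move=> j.
    have [d d0 hd] := abs_step _ _ _ (qs j) (hode t t0 j) e' e'0.
    apply/nbhs_ballP; exists d => //= s; rewrite /ball /= => hs ts.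
    apply: hd; apply/andP; split => //.
    move: hs; rewrite ltr0_norm ?subr_lt0 //; lra.
  have H0 : \forall s \near t, forall j, t < s ->
      `|q s j - qs j| <= `|q t j - qs j| + (D j + e') * (s - t).
    by apply: (filter_forall (nbhs_filter t)); exact: hj.
  have [d d0 hd] := (nbhs_ballP t _).1 H0.
  exists d => // s /andP[ts tsd].
  have hb : ball t d s by rewrite /ball /= ltr0_norm ?subr_lt0 //; lra.
  have H := hd s hb.
  have step : V s <= V t + (\sum_(j < n) D j + n%:R * e') * (s - t).
    rewrite /V; apply: le_trans (ler_sum _ (fun j _ => H j ts)) _.
    rewrite big_split /= -mulr_suml big_split /= sumr_const card_ord mulr_natl.
    by [].
  have hn' : n%:R * e' = eta by rewrite /e' mulrC divfK // gt_eqF.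
  rewrite hn' in step.
  pose S := [pred j | if q t j - qs j == 0 then 0 <= F (q t) j - F qs j
                      else 0 < q t j - qs j].
  have eD : forall j, D j = (if S j then 1 else -1) * (F (q t) j - F qs j)
                            - `|q t j - qs j| / T.
    move=> j; rewrite /D hqd /S /=.
    have [e0|ne] := eqVneq (q t j - qs j) 0.
      rewrite e0 normr0 !mul0r !subr0.
      have [h|h] := leP 0 (F (q t) j - F qs j).
        by rewrite ger0_norm // mul1r.
      by rewrite ltr0_norm // mulN1r.
    have [gp|gn] := ltP 0 (q t j - qs j).
      rewrite gtr0_sg // gtr0_norm //; ring.
    have gn' : q t j - qs j < 0 by rewrite lt_neqAle ne gn.
    rewrite ltr0_sg // ltr0_norm //; ring.
  have hD : \sum_(j < n) D j <= - V t / T.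
    rewrite (eq_bigr _ (fun j _ => eD j)) sumrB -mulr_suml -/(V t).
    have := comb_flow _ _ hn _ heps _ hr kappa (price_vec T c (q t))
      (price_vec T c qs) S.
    rewrite -/(F (q t) _) -/(F qs _).
    have hS : forall j, S j -> price_vec T c qs j <= price_vec T c (q t) j.
      move=> j; rewrite /S /=.
      have [e0|ne] := eqVneq (q t j - qs j) 0.
        by move=> _; rewrite /price_vec; have -> : q t j = qs j by apply/eqP; rewrite -subr_eq0 e0.
      move=> h; apply: price_mono => //; lra.
    have hNS : forall j, ~~ S j -> price_vec T c (q t) j <= price_vec T c qs j.
      move=> j; rewrite /S /=.
      have [e0|ne] := eqVneq (q t j - qs j) 0.
        by move=> _; rewrite /price_vec; have -> : q t j = qs j by apply/eqP; rewrite -subr_eq0 e0.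
      rewrite -leNgt => h; apply: price_mono => //; lra.
    move=> /(_ hS hNS) h; rewrite mulNr; lra.
  have hst : 0 <= s - t by lra.
  have := ler_wpM2r hst hD.
  lra.
have hcont : forall t, 0 < t -> forall e, 0 < e -> exists2 d, 0 < d &
    forall x, t - d < x < t -> V t <= V x + e.
  move=> t t0 e e0.
  pose e' := e / n%:R.
  have e'0 : 0 < e' by rewrite divr_gt0.
  have hj : forall j, \forall x \near t, `|q x j - q t j| <= e'.
    move=> j.
    have [d1 d10 h1] := deriv_eps _ _ _ (hode t t0 j) 1 ltr01.
    set f' := qdot T eps c r kappa (q t) j in h1.
    have K0 : 0 < `|f'| + 1 by rewrite ltr_wpDl.
    apply/nbhs_ballP; exists (Num.min d1 (e' / (`|f'| + 1))).
      by rewrite /= lt_min d10 divr_gt0.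
    move=> x; rewrite /ball /= distrC lt_min => /andP[hx1 hx2].
    have := h1 x hx1.
    have := ler_normD (q x j - q t j - f' * (x - t)) (f' * (x - t)).
    rewrite subrK normrM mul1r => ha hb.
    move: hx2; rewrite ltr_pdivlMr // => hx2.
    have : `|f'| * `|x - t| + `|x - t| <= e'.
      have -> : `|f'| * `|x - t| + `|x - t| = `|x - t| * (`|f'| + 1) by ring.
      exact: ltW.
    lra.
  have H0 : \forall x \near t, forall j, `|q x j - q t j| <= e'.
    by apply: (filter_forall (nbhs_filter t)); exact: hj.
  have [d d0 hd] := (nbhs_ballP t _).1 H0.
  exists d => // x /andP[h1 h2].
  have hb : ball t d x by rewrite /ball /= gtr0_norm ?subr_gt0 //; lra.
  have H := hd x hb.
  have hn' : n%:R * e' = e by rewrite /e' mulrC divfK // gt_eqF.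
  have : V t <= \sum_(j < n) (`|q x j - qs j| + e').
    apply: ler_sum => j _.
    have := ler_normD (q t j - q x j) (q x j - qs j).
    rewrite addrA subrK (distrC (q t j) (q x j)).
    have := H j; lra.
  rewrite big_split /= sumr_const card_ord -mulr_natl hn'.
  by [].
have hmono : forall a b, 0 < a -> a <= b -> V b <= V a.
  move=> a b a0 ab.
  have := real_ind2 V a b 0 ab.
  rewrite mul0r addr0; apply.
    move=> t /andP[ha1 ha2]; apply: hcont; lra.
  move=> eta eta0 t /andP[ha1 ha2].
  have [d d0 hd] := hloc t (ltac:(lra)) eta eta0.
  exists d => // s hs; have := hd s hs.
  have : 0 <= V t / T * (s - t).
    apply: mulr_ge0; first by apply: divr_ge0 => //; exact: ltW.
    by move: hs => /andP[h _]; lra.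
  rewrite mulNr; lra.
have hdec : forall b, 1 <= b -> V b <= V 1 + (- V b / T) * (b - 1).
  move=> b b1.
  apply: real_ind2 => //.
    move=> t /andP[ha1 ha2]; apply: hcont; lra.
  move=> eta eta0 t /andP[ha1 ha2].
  have [d d0 hd] := hloc t (ltac:(lra)) eta eta0.
  exists d => // s hs; have := hd s hs.
  have hst : 0 <= s - t by move: hs => /andP[h _]; lra.
  have hVb : V b <= V t by apply: hmono; lra.
  have : V b / T <= V t / T by rewrite ler_pM2r ?invr_gt0.
  move/(ler_wpM2r hst).
  rewrite !mulNr; lra.
have hq : forall j, q t j @[t --> +oo] --> qs j.
  move=> j; apply/cvgrPdist_le => e e0.
  pose K := V 1 * T / e.
  have K0 : 0 <= K by rewrite /K divr_ge0 ?mulr_ge0 //; [exact: ltW|exact: ltW].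
  have hKe : K * e = V 1 * T by rewrite /K divfK // gt_eqF.
  apply: filterS (@nbhs_pinfty_gt R (K + 2) (num_real _)) => b hb.
  rewrite distrC; apply: le_trans (Vj b j) _.
  have b1 : 1 <= b by lra.
  have hb1 : 0 < b - 1 by lra.
  have hd := hdec b b1.
  have h1 : V b / T * (b - 1) <= V 1 by move: hd; rewrite !mulNr; have := V0 b; lra.
  have h2 : V b * (b - 1) <= V 1 * T.
    have -> : V b * (b - 1) = V b / T * (b - 1) * T by rewrite mulrAC divfK // gt_eqF.
    by rewrite ler_pM2r.
  have h3 : V 1 * T <= e * (b - 1) by rewrite -hKe mulrC ler_pM2l //; lra.
  have : V b * (b - 1) <= e * (b - 1) by lra.
  by rewrite ler_pM2r.
have hqs : forall j, 0 < qs j.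
  move=> j; have e := heq j.
  have hs : 0 < \sum_(i < m) flow eps r kappa (price_vec T c qs) i j.
    rewrite (bigD1 (Ordinal hm)) //=.
    have := flow_pos _ _ hn eps _ hr kappa (price_vec T c qs) (Ordinal hm) j.
    have : 0 <= \sum_(i < m | i != Ordinal hm) flow eps r kappa (price_vec T c qs) i j.
      by apply: sumr_ge0 => i _; apply: ltW; exact: (flow_pos _ _ hn).
    lra.
  rewrite e in hs.
  have -> : qs j = qs j / T * T by rewrite divfK // gt_eqF.
  exact: mulr_gt0.
have hp : forall j, price_vec T c (q t) j @[t --> +oo] --> price_vec T c qs j.
  move=> j; rewrite /price_vec.
  have hinv : c j / q t j @[t --> +oo] --> c j / qs j.
    by apply: cvgMr; apply: cvgV; [rewrite gt_eqF | exact: hq].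
  apply/cvgrPdist_le => e e0.
  have h1 := (cvgrPdist_le _ _).1 hinv (e / T) (divr_gt0 e0 hT).
  have h2 := (cvgrPdist_lt _ _).1 (hq j) (qs j) (hqs j).
  near=> t.
  have ht1 : `|c j / qs j - c j / q t j| <= e / T by near: t; exact: h1.
  have ht2 : `|qs j - q t j| < qs j by near: t; exact: h2.
  have qt0 : 0 < q t j by have := ler_norm (qs j - q t j); lra.
  rewrite distrC; apply: le_trans (price_lip _ _ _ _ hT (hc j) qt0 (hqs j)) _.
  by rewrite mulrC -ler_pdivlMr // distrC.
split => //; split => // i j.
rewrite /flow /delta.
apply: cvgMr; apply: cvgM.
  exact: cvg_exp_term.
apply: cvgV; first by rewrite gt_eqF // sum_exp_gt0.
apply: cvg_sum_ord => k; exact: cvg_exp_term.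
Unshelve. all: by end_near.
Qed.
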